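(* Let $n=2$, $\Gamma=I_2$, $\Sigma=\begin{pmatrix}1&\rho\\ \rho&1\end{pmatrix}$ with $\rho\in(-1,1)$, and $M=\begin{pmatrix}M_{11}&M_{12}\\ M_{21}&M_{22}\end{pmatrix}$ arbitrary. Let $\kappa=\rho(M_{11}+M_{22})-(M_{12}+M_{21})$ and let $\Delta$ be the Nash equilibrium (matrix of deviations of negotiating positions from true beliefs). (1) If only agent $k$ is strategic ($S=\{k\}$), then $\Delta_{ij}=\kappa/3$ if $i\neq k$ and $j=k$, and $\Delta_{ij}=0$ otherwise. (2) If both agents are strategic ($S=\{1,2\}$), then $\Delta_{ij}=\kappa/4$ if $i\neq j$ and $\Delta_{ii}=0$.
   Context: Fix agents $[n]=\{1,\dots,n\}$. Let $\Sigma\in\mathbb{R}^{n\times n}$ be symmetric positive definite, $\Gamma=\mathrm{diag}(\gamma_1,\dots,\gamma_n)$ with all $\gamma_i>0$, and let $M\in\mathbb{R}^{n\times n}$ be the matrix of true beliefs with $i$-th column $\mu_i=Me_i$. For a matrix of reported negotiating positions $M'\in\mathbb{R}^{n\times n}$, the stable point for $M'$ is the unique pair $(W,P)$ of real $n\times n$ matrices with $W=W^T$, $P^T=-P$ and $M'-P=2\Sigma W\Gamma$. Agent $i$'s (true) utility is $g_i(W,P)=w_i^T(\mu_i-Pe_i)-\gamma_i\, w_i^T\Sigma w_i$, $w_i=We_i$. $S\subseteq[n]$ is the set of strategic agents; honest agents $i\notin S$ report $\mu_i'=\mu_i$, and each $k\in S$ reports $\mu_k'=\mu_k+\Delta e_k$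 with arbitrary $\Delta e_k\in\mathbb{R}^n$. A Nash equilibrium is a matrix $\Delta$ with $\Delta e_j=0$ for $j\notin S$ such that for each $k\in S$, given the other columns, the column $\Delta e_k$ maximizes $g_k$ at the stable point for $M+\Delta$. *)

(* Defs.v *)
From HB Require Import structures.
From mathcomp Require Import all_boot all_order all_algebra.
Set Implicit Arguments. Unset Strict Implicit. Unset Printing Implicit Defensive.
Import Order.TTheory GRing.Theory Num.Theory.
Local Open Scope ring_scope.

(* Agents are indexed by 'I_n (0-based: paper's agent i is ordinal i-1).
   Sigma, Gamma, M, M', W, P, Delta are n x n matrices over R. *)

Definition stable_point (R : realFieldType) (n : nat)
    (Sigma Gamma M' W P : 'M[R]_n) : Prop :=
  W^T = W /\ P^T = - P /\ M' - P = 2%:R *: (Sigma *m W *m Gamma).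

Definition utility (R : realFieldType) (n : nat)
    (Sigma Gamma M W P : 'M[R]_n) (i : 'I_n) : R :=
  ((col i W)^T *m (col i M - col i P)) 0 0
  - Gamma i i * ((col i W)^T *m Sigma *m col i W) 0 0.

Definition set_col (R : realFieldType) (n : nat) (D : 'M[R]_n) (k : 'I_n)
    (d : 'cV[R]_n) : 'M[R]_n :=
  \matrix_(i, j) if j == k then d i 0 else D i j.

(* Delta is a Nash equilibrium with strategic set S: honest columns are 0, and
   for every strategic k, the column Delta e_k maximizes g_k at the stable
   point of M + Delta among all alternative columns d (other columns fixed). *)
Definition nash_equilibrium (R : realFieldType) (n : nat)
    (Sigma Gamma M : 'M[R]_n) (S : {set 'I_n}) (Delta : 'M[R]_n) : Prop :=
  (forall j, j \notin S -> col j Delta = 0) /\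
  forall k, k \in S -> forall (d : 'cV[R]_n) (W P W' P' : 'M[R]_n),
    stable_point Sigma Gamma (M + Delta) W P ->
    stable_point Sigma Gamma (M + set_col Delta k d) W' P' ->
    utility Sigma Gamma M W' P' k <= utility Sigma Gamma M W P k.

Definition Sigma2 (R : realFieldType) (rho : R) : 'M[R]_2 :=
  \matrix_(i, j) if i == j then 1 else rho.

(* Main.v *)
Require Import Defs.
From HB Require Import structures.
From mathcomp Require Import all_boot all_order all_algebra ring lra.
Import Order.TTheory GRing.Theory Num.Theory.
Local Open Scope ring_scope.

Lemma ord2P (i : 'I_2) : i = 0 \/ i = 1.
Proof. case: i => [[|[|m]] Hm] //; [left|right]; by apply/val_inj. Qed.

Section S.
Variable R : realFieldType.
Implicit Types A B W P M : 'M[R]_2.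

Lemma eqM2 A B : A = B <-> [/\ A 0 0 = B 0 0, A 0 1 = B 0 1, A 1 0 = B 1 0 & A 1 1 = B 1 1].
Proof.
split; first by move->.
case=> h1 h2 h3 h4; apply/matrixP => i j.
by case: (ord2P i) => ->; case: (ord2P j) => ->.
Qed.

Lemma sum2E (F : 'I_2 -> R) : \sum_(j < 2) F j = F 0 + F 1.
Proof.
rewrite big_ord_recl big_ord_recl big_ord0 addr0.
by have -> : lift ord0 (ord0 : 'I_1) = (1 : 'I_2) by apply/val_inj.
Qed.

Lemma mul2E (A B : 'M[R]_2) i j : (A *m B) i j = A i 0 * B 0 j + A i 1 * B 1 j.
Proof.
rewrite mxE big_ord_recl big_ord_recl big_ord0 addr0.
by have -> : lift ord0 (ord0 : 'I_1) = (1 : 'I_2) by apply/val_inj.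
Qed.

Variable rho : R.

Lemma spE M' W P : stable_point (Sigma2 rho) 1%:M M' W P <->
  [/\ W 0 1 = W 1 0, P 0 0 = 0, P 1 1 = 0, P 0 1 = - P 1 0 &
   [/\ M' 0 0 = 2 * (W 0 0 + rho * W 1 0),
       M' 0 1 - P 0 1 = 2 * (W 0 1 + rho * W 1 1),
       M' 1 0 - P 1 0 = 2 * (rho * W 0 0 + W 1 0) &
       M' 1 1 = 2 * (rho * W 0 1 + W 1 1)]].
Proof.
rewrite /stable_point mulmx1 !eqM2 !mxE !sum2E !mxE /=.
split.
- case=> [[h1 h2 h3 h4] [[p1 p2 p3 p4] [e1 e2 e3 e4]]].
  have hp0 : P 0 0 = 0 by lra.
  have hp1 : P 1 1 = 0 by lra.
  split=> //; try lra; split; lra.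
- case=> h1 hp0 hp1 hp [e1 e2 e3 e4].
  split; [|split]; split; lra.
Qed.

Lemma util0 M W P : utility (Sigma2 rho) 1%:M M W P 0 =
  W 0 0 * (M 0 0 - P 0 0) + W 1 0 * (M 1 0 - P 1 0)
  - (W 0 0 * (W 0 0 + rho * W 1 0) + W 1 0 * (rho * W 0 0 + W 1 0)).
Proof.
rewrite /utility !(mxE, sum2E) /=. ring.
Qed.

Lemma util1 M W P : utility (Sigma2 rho) 1%:M M W P 1 =
  W 0 1 * (M 0 1 - P 0 1) + W 1 1 * (M 1 1 - P 1 1)
  - (W 0 1 * (W 0 1 + rho * W 1 1) + W 1 1 * (rho * W 0 1 + W 1 1)).
Proof.
rewrite /utility !(mxE, sum2E) /=. ring.
Qed.
End S.

Section T.
Variable R : realFieldType.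
Variable rho : R.

Definition mk2 (x y z w : R) : 'M[R]_2 :=
  \matrix_(i, j) if i == 0 then (if j == 0 then x else y) else (if j == 0 then z else w).

Lemma mk2E00 x y z w : mk2 x y z w 0 0 = x. Proof. by rewrite /mk2 !mxE. Qed.
Lemma mk2E01 x y z w : mk2 x y z w 0 1 = y. Proof. by rewrite /mk2 !mxE. Qed.
Lemma mk2E10 x y z w : mk2 x y z w 1 0 = z. Proof. by rewrite /mk2 !mxE. Qed.
Lemma mk2E11 x y z w : mk2 x y z w 1 1 = w. Proof. by rewrite /mk2 !mxE. Qed.

Lemma exists_sp (hr1 : -1 < rho) (hr2 : rho < 1) (M' : 'M[R]_2) : exists W P, stable_point (Sigma2 rho) 1%:M M' W P.
Proof.
have hD0 : 0 < 1 - rho ^+ 2.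
  have h1 : 0 < 1 - rho by lra.
  have h2 : 0 < 1 + rho by lra.
  have := mulr_gt0 h1 h2. rewrite expr2. nra.
have hD : 1 - rho ^+ 2 != 0 by rewrite lt0r_neq0.
pose b := (M' 0 1 + M' 1 0 - rho * (M' 0 0 + M' 1 1)) / (4 * (1 - rho ^+ 2)).
pose a := M' 0 0 / 2 - rho * b.
pose c := M' 1 1 / 2 - rho * b.
pose p := M' 0 1 - 2 * b - 2 * rho * c.
exists (mk2 a b b c), (mk2 0 p (-p) 0).
apply/spE; rewrite !(mk2E00, mk2E01, mk2E10, mk2E11).
have hb : 4 * (1 - rho ^+ 2) * b = M' 0 1 + M' 1 0 - rho * (M' 0 0 + M' 1 1).
  by rewrite /b; field.
split=> //; first by rewrite opprK.
move: hb; rewrite expr2 => hb.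
rewrite opprK /p /c /a; split; try first [ field | ring | lra ].
all: done.
Qed.
End T.

Lemma br0_suff (R : realFieldType) (rho : R) (hr1 : -1 < rho) (hr2 : rho < 1) (M D : 'M[R]_2) :
 (D 0 0 = 0 /\ 2 * D 1 0 = rho * (M 0 0 + M 1 1 + D 0 0 + D 1 1) - (M 0 1 + M 1 0 + D 0 1 + D 1 0)) ->
 (forall d W P W' P', stable_point (Sigma2 rho) 1%:M (M + D) W P ->
   stable_point (Sigma2 rho) 1%:M (M + set_col D 0 d) W' P' ->
   utility (Sigma2 rho) 1%:M M W' P' 0 <= utility (Sigma2 rho) 1%:M M W P 0).
Proof.
move=> [hD00 hfoc] d W P W' P' /spE[hw hp0 hp1 hp [e1 e2 e3 e4]] /spE[hw' hp0' hp1' hp' [f1 f2 f3 f4]].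
rewrite !util0.
move: e1 e2 e3 e4 f1 f2 f3 f4; rewrite /set_col !mxE /=.
rewrite hw hw' hp0 hp0' => e1 e2 e3 e4 f1 f2 f3 f4.
move: (W 0 0) (W 1 0) (W 1 1) (W' 0 0) (W' 1 0) (W' 1 1) e1 e2 e3 e4 f1 f2 f3 f4 => a b c a' b' c' e1 e2 e3 e4 f1 f2 f3 f4.
have r1 := congr1 (fun x => rho * x) e1.
have r4 := congr1 (fun x => rho * x) e4.
have s4 := congr1 (fun x => rho * x) f4.
simpl in r1, r4, s4.
have kb : 4 * (1 - rho * rho) * b = (M 0 1 + D 0 1 + M 1 0 + D 1 0) - rho * (M 0 0 + D 0 0 + M 1 1 + D 1 1) by lra.
have hD10 : D 1 0 = - 2 * (1 - rho * rho) * b by lra.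
have hPP : P' 1 0 - P 1 0 = 2 * (1 - rho * rho) * (b' - b) by lra.
have hM00 : M 0 0 = 2 * (a + rho * b) by lra.
have hM10 : M 1 0 = P 1 0 + 2 * (rho * a + b) + 2 * (1 - rho * rho) * b by lra.
have -> : P' 1 0 = P 1 0 + 2 * (1 - rho * rho) * (b' - b) by lra.
rewrite hM10 hM00 !subr0.
have q1 : 0 <= (a' - a + rho * (b' - b)) ^+ 2 by apply: sqr_ge0.
have q2 : 0 <= (1 - rho * rho) * (b' - b) ^+ 2 by apply: mulr_ge0; [nra | apply: sqr_ge0].
rewrite !expr2 in q1 q2. nra.
Qed.

Lemma br0_nec (R : realFieldType) (rho : R) (hr1 : -1 < rho) (hr2 : rho < 1) (M D : 'M[R]_2) :
 (forall d W P W' P', stable_point (Sigma2 rho) 1%:M (M + D) W P ->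
   stable_point (Sigma2 rho) 1%:M (M + set_col D 0 d) W' P' ->
   utility (Sigma2 rho) 1%:M M W' P' 0 <= utility (Sigma2 rho) 1%:M M W P 0) ->
 (D 0 0 = 0 /\ 2 * D 1 0 = rho * (M 0 0 + M 1 1 + D 0 0 + D 1 1) - (M 0 1 + M 1 0 + D 0 1 + D 1 0)).
Proof.
move=> H.
have [W [P hs]] := @exists_sp R rho hr1 hr2 (M + D).
have hs0 := hs.
move/spE: hs0 => [hw hp0 hp1 hp [e1 e2 e3 e4]].
move: e1 e2 e3 e4; rewrite !mxE hw => e1 e2 e3 e4.
have [a ea] : exists a, W 0 0 = a by eexists.
have [b eb] : exists b, W 1 0 = b by eexists.
have [c ec] : exists c, W 1 1 = c by eexists.
rewrite ea eb ec in e1 e2 e3 e4.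
have G : forall h1 h2, - h1 * D 0 0 - h2 * (D 1 0 + 2 * (1 - rho * rho) * b)
   - (h1 * h1 + 2 * rho * h1 * h2 + (1 + 2 * (1 - rho * rho)) * h2 * h2) <= 0.
  move=> h1 h2.
  pose W' := @mk2 R (a + h1) (b + h2) (b + h2) (c - rho * h2).
  pose P' := @mk2 R 0 (P 0 1 - 2 * (1 - rho * rho) * h2) (P 1 0 + 2 * (1 - rho * rho) * h2) 0.
  pose d : 'cV[R]_2 := \col_i (if i == 0 then 2 * (a + h1 + rho * (b + h2)) - M 0 0
             else 2 * (rho * (a + h1) + b + h2) + P 1 0 + 2 * (1 - rho * rho) * h2 - M 1 0).
  have hs' : stable_point (Sigma2 rho) 1%:M (M + set_col D 0 d) W' P'.
    apply/spE; rewrite /W' /P' /d /set_col !(mk2E00, mk2E01, mk2E10, mk2E11) !mxE /=.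
    have r4 := congr1 (fun x => rho * x) e4. simpl in r4.
    split; try lra. split; lra.
  have := H d W P W' P' hs hs'.
  rewrite !util0 /W' /P' !(mk2E00, mk2E01, mk2E10, mk2E11) hp0 ea eb.
  have hM00 : M 0 0 = 2 * (a + rho * b) - D 0 0 by lra.
  have hM10 : M 1 0 = P 1 0 + 2 * (rho * a + b) - D 1 0 by lra.
  rewrite hM00 hM10 -subr_le0 => h.
  apply: (le_trans _ h); rewrite le_eqVlt; apply/orP; left; apply/eqP; ring.
have r1 := congr1 (fun x => rho * x) e1.
have r4 := congr1 (fun x => rho * x) e4.
simpl in r1, r4.
have kb : 4 * (1 - rho * rho) * b = (M 0 1 + D 0 1 + M 1 0 + D 1 0) - rho * (M 0 0 + D 0 0 + M 1 1 + D 1 1) by lra.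
have hD : 0 < 1 - rho * rho by nra.
have g1 := G (- D 0 0 / 2) 0.
have hD00 : D 0 0 = 0.
  have : D 0 0 * D 0 0 <= 0 by lra.
  nra.
have g2 := G 0 (- (D 1 0 + 2 * (1 - rho * rho) * b) / 4).
have hG : D 1 0 + 2 * (1 - rho * rho) * b = 0.
  set g := D 1 0 + 2 * (1 - rho * rho) * b in g2 *.
  have : g * g * (3 - 2 * (1 - rho * rho)) <= 0 by lra.
  nra.
split=> //; lra.
Qed.

Lemma br1_suff (R : realFieldType) (rho : R) (hr1 : -1 < rho) (hr2 : rho < 1) (M D : 'M[R]_2) :
 (D 1 1 = 0 /\ 2 * D 0 1 = rho * (M 0 0 + M 1 1 + D 0 0 + D 1 1) - (M 0 1 + M 1 0 + D 0 1 + D 1 0)) ->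
 (forall d W P W' P', stable_point (Sigma2 rho) 1%:M (M + D) W P ->
   stable_point (Sigma2 rho) 1%:M (M + set_col D 1 d) W' P' ->
   utility (Sigma2 rho) 1%:M M W' P' 1 <= utility (Sigma2 rho) 1%:M M W P 1).
Proof.
move=> [hD11 hfoc] d W P W' P' /spE[hw hp0 hp1 hp [e1 e2 e3 e4]] /spE[hw' hp0' hp1' hp' [f1 f2 f3 f4]].
rewrite !util1.
move: e1 e2 e3 e4 f1 f2 f3 f4; rewrite /set_col !mxE /=.
rewrite hw hw' hp1 hp1' => e1 e2 e3 e4 f1 f2 f3 f4.
move: (W 0 0) (W 1 0) (W 1 1) (W' 0 0) (W' 1 0) (W' 1 1) e1 e2 e3 e4 f1 f2 f3 f4 => a b c a' b' c' e1 e2 e3 e4 f1 f2 f3 f4.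
have r1 := congr1 (fun x => rho * x) e1.
have r4 := congr1 (fun x => rho * x) e4.
have s1 := congr1 (fun x => rho * x) f1.
simpl in r1, r4, s1.
have kb : 4 * (1 - rho * rho) * b = (M 0 1 + D 0 1 + M 1 0 + D 1 0) - rho * (M 0 0 + D 0 0 + M 1 1 + D 1 1) by lra.
have hD01 : D 0 1 = - 2 * (1 - rho * rho) * b by lra.
have hPP : P' 0 1 - P 0 1 = 2 * (1 - rho * rho) * (b' - b) by lra.
have hM11 : M 1 1 = 2 * (rho * b + c) by lra.
have hM01 : M 0 1 = P 0 1 + 2 * (b + rho * c) + 2 * (1 - rho * rho) * b by lra.
have -> : P' 0 1 = P 0 1 + 2 * (1 - rho * rho) * (b' - b) by lra.
rewrite hM01 hM11 !subr0.
have q1 : 0 <= (c' - c + rho * (b' - b)) ^+ 2 by apply: sqr_ge0.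
have q2 : 0 <= (1 - rho * rho) * (b' - b) ^+ 2 by apply: mulr_ge0; [nra | apply: sqr_ge0].
rewrite !expr2 in q1 q2. nra.
Qed.

Lemma br1_nec (R : realFieldType) (rho : R) (hr1 : -1 < rho) (hr2 : rho < 1) (M D : 'M[R]_2) :
 (forall d W P W' P', stable_point (Sigma2 rho) 1%:M (M + D) W P ->
   stable_point (Sigma2 rho) 1%:M (M + set_col D 1 d) W' P' ->
   utility (Sigma2 rho) 1%:M M W' P' 1 <= utility (Sigma2 rho) 1%:M M W P 1) ->
 (D 1 1 = 0 /\ 2 * D 0 1 = rho * (M 0 0 + M 1 1 + D 0 0 + D 1 1) - (M 0 1 + M 1 0 + D 0 1 + D 1 0)).
Proof.
move=> H.
have [W [P hs]] := @exists_sp R rho hr1 hr2 (M + D).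
have hs0 := hs.
move/spE: hs0 => [hw hp0 hp1 hp [e1 e2 e3 e4]].
move: e1 e2 e3 e4; rewrite !mxE hw => e1 e2 e3 e4.
have [a ea] : exists a, W 0 0 = a by eexists.
have [b eb] : exists b, W 1 0 = b by eexists.
have [c ec] : exists c, W 1 1 = c by eexists.
rewrite ea eb ec in e1 e2 e3 e4.
have G : forall h1 h2, - h1 * D 1 1 - h2 * (D 0 1 + 2 * (1 - rho * rho) * b)
   - (h1 * h1 + 2 * rho * h1 * h2 + (1 + 2 * (1 - rho * rho)) * h2 * h2) <= 0.
  move=> h1 h2.
  pose W' := @mk2 R (a - rho * h2) (b + h2) (b + h2) (c + h1).
  pose P' := @mk2 R 0 (P 0 1 + 2 * (1 - rho * rho) * h2) (P 1 0 - 2 * (1 - rho * rho) * h2) 0.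
  pose d : 'cV[R]_2 := \col_i (if i == 0 then
               2 * (b + h2 + rho * (c + h1)) + P 0 1 + 2 * (1 - rho * rho) * h2 - M 0 1
             else 2 * (rho * (b + h2) + c + h1) - M 1 1).
  have hs' : stable_point (Sigma2 rho) 1%:M (M + set_col D 1 d) W' P'.
    apply/spE; rewrite /W' /P' /d /set_col !(mk2E00, mk2E01, mk2E10, mk2E11) !mxE /=.
    split; try lra. split; lra.
  have := H d W P W' P' hs hs'.
  rewrite !util1 /W' /P' !(mk2E00, mk2E01, mk2E10, mk2E11) hp1 hw eb ec.
  have hM11 : M 1 1 = 2 * (rho * b + c) - D 1 1 by lra.
  have hM01 : M 0 1 = P 0 1 + 2 * (b + rho * c) - D 0 1 by lra.
  rewrite hM11 hM01 -subr_le0 => h.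
  apply: (le_trans _ h); rewrite le_eqVlt; apply/orP; left; apply/eqP; ring.
have r1 := congr1 (fun x => rho * x) e1.
have r4 := congr1 (fun x => rho * x) e4.
simpl in r1, r4.
have kb : 4 * (1 - rho * rho) * b = (M 0 1 + D 0 1 + M 1 0 + D 1 0) - rho * (M 0 0 + D 0 0 + M 1 1 + D 1 1) by lra.
have hD : 0 < 1 - rho * rho by nra.
have g1 := G (- D 1 1 / 2) 0.
have hD11 : D 1 1 = 0.
  have : D 1 1 * D 1 1 <= 0 by lra.
  nra.
have g2 := G 0 (- (D 0 1 + 2 * (1 - rho * rho) * b) / 4).
have hG : D 0 1 + 2 * (1 - rho * rho) * b = 0.
  set g := D 0 1 + 2 * (1 - rho * rho) * b in g2 *.
  have : g * g * (3 - 2 * (1 - rho * rho)) <= 0 by lra.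
  nra.
split=> //; lra.
Qed.

Section U.
Variable R : realFieldType.
Lemma colz (D : 'M[R]_2) j : col j D = 0 <-> D 0 j = 0 /\ D 1 j = 0.
Proof.
split.
- move=> h; split.
  + by have := congr1 (fun A : 'cV[R]_2 => A 0 0) h; rewrite !mxE.
  + by have := congr1 (fun A : 'cV[R]_2 => A 1 0) h; rewrite !mxE.
- case=> h0 h1; apply/matrixP=> i k; rewrite !mxE.
  by case: (ord2P i) => ->.
Qed.
End U.

Lemma ne_br (R : realFieldType) (rho : R) (hr1 : -1 < rho) (hr2 : rho < 1) (M D : 'M[R]_2) S :
  nash_equilibrium (Sigma2 rho) 1%:M M S D <->
  [/\ (forall j, j \notin S -> col j D = 0),
   (0 \in S -> D 0 0 = 0 /\ 2 * D 1 0 = rho * (M 0 0 + M 1 1 + D 0 0 + D 1 1) - (M 0 1 + M 1 0 + D 0 1 + D 1 0)) &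
   (1 \in S -> D 1 1 = 0 /\ 2 * D 0 1 = rho * (M 0 0 + M 1 1 + D 0 0 + D 1 1) - (M 0 1 + M 1 0 + D 0 1 + D 1 0))].
Proof.
split.
- case=> h1 h2; split=> // hk.
  + by apply: br0_nec => //; apply: h2.
  + by apply: br1_nec => //; apply: h2.
- case=> h1 h2 h3; split=> // k hk.
  case: (ord2P k) => Ek; subst k.
  + by apply: br0_suff => //; apply: h2.
  + by apply: br1_suff => //; apply: h3.
Qed.

Theorem mainTheorem10 (R : realFieldType) (rho : R) (M : 'M[R]_2)
  (hrho1 : -1 < rho) (hrho2 : rho < 1) :
  let kappa := rho * (M 0 0 + M 1 1) - (M 0 1 + M 1 0) in
  (forall (k : 'I_2) (Delta : 'M[R]_2),
     nash_equilibrium (Sigma2 rho) 1%:M M [set k] Delta <->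
     Delta = \matrix_(i, j) (if (i != k) && (j == k) then kappa / 3%:R else 0))
  /\
  (forall Delta : 'M[R]_2,
     nash_equilibrium (Sigma2 rho) 1%:M M [set: 'I_2] Delta <->
     Delta = \matrix_(i, j) (if i != j then kappa / 4%:R else 0)).
Proof.
move=> kappa; subst kappa; split.
- move=> k D; rewrite ne_br // eqM2 !mxE.
  case: (ord2P k) => Ek; subst k; rewrite /=.
  + split.
    * case=> hc h0 _.
      have := hc 1; rewrite in_set1 => /(_ isT) /colz [c01 c11].
      have [d00 e] := h0 (set11 0).
      rewrite d00 c01 c11 in e. split; lra.
    * case=> d00 d01 d10 d11; rewrite d00 d11; split.
      - move=> j; rewrite in_set1; case: (ord2P j) => -> //= _; apply/colz; split; lra.
      - move=> _; split; lra.
      - by rewrite in_set1.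
  + split.
    * case=> hc _ h1.
      have := hc 0; rewrite in_set1 => /(_ isT) /colz [c00 c10].
      have [d11 e] := h1 (set11 1).
      rewrite d11 c00 c10 in e. split; lra.
    * case=> d00 d01 d10 d11; rewrite d00 d11; split.
      - move=> j; rewrite in_set1; case: (ord2P j) => -> //= _; apply/colz; split; lra.
      - by rewrite in_set1.
      - move=> _; split; lra.
- move=> D; rewrite ne_br // eqM2 !mxE /=; split.
  + case=> _ h0 h1.
    have [d00 e0] := h0 (in_setT 0).
    have [d11 e1] := h1 (in_setT 1).
    rewrite d00 d11 in e0 e1. split; lra.
  + case=> d00 d01 d10 d11; rewrite d00 d11; split.
    * by move=> j; rewrite in_setT.
    * move=> _; split; lra.
    * move=> _; split; lra.
Qed.
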